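(* Let $Z$ be a random variable and $M\ge0$ a random variable, and let $C,D$ be constants such that for every $\kappa>0$ and $\delta\in(0,1)$, $\Pr\big[Z\ge C(\kappa+M)\sqrt{\log(1/\delta)+D+\log(1+M/\kappa)}\big]\le\delta$. Then for any $\beta,\kappa>0$ and $\delta\in(0,1)$, \[ \Pr\Big[Z\ge C((1+\beta)M+\kappa)\sqrt{\log\tfrac2\delta+2\,\mathrm{lil}\big(\tfrac{\beta M}{\kappa}\big)+D+\log\big(1+\tfrac e\beta\big)}\Big]\le\delta. \] In particular, if $D\gtrsim1$, then taking $\beta=1$, $\Pr\big[Z\gtrsim C(M+\kappa)\sqrt{\log\frac1\delta+\mathrm{lil}(\frac M\kappa)+D}\big]\le\delta$.
   Context: $\log_+x:=\max\{1,\log x\}$, $\mathrm{lil}(x):=\log_+(\log_+x)$. $\lesssim,\gtrsim$ hide universal constants. *)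

(* Defs.v *)
From HB Require Import structures.
From mathcomp Require Import all_boot all_order all_algebra.
From mathcomp Require Import all_classical all_reals all_analysis.
Set Implicit Arguments. Unset Strict Implicit. Unset Printing Implicit Defensive.
Import Order.TTheory GRing.Theory Num.Theory.
Local Open Scope ring_scope.
Local Open Scope classical_set_scope.

Definition logp {R : realType} (x : R) : R := Num.max 1 (ln x).
Definition lil {R : realType} (x : R) : R := logp (logp x).

Definition ge_event {T : Type} {R : realType} (Z t : T -> R) : set T :=
  [set w | t w <= Z w].

Definition tail_hyp {R : realType} {d : measure_display} {T : measurableType d}
  (P : probability T R) (Z M : {RV P >-> R}) (C D : R) : Prop :=
  forall kappa delta : R, 0 < kappa -> 0 < delta < 1 ->
    (P (ge_event Z (fun w => (C * (kappa + M w) *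
                 Num.sqrt (ln (delta^-1) + D + ln (1 + M w / kappa)))%R))
       <= delta%:E)%E.
Arguments tail_hyp {R d T} P Z M C D.

(* Main.v *)
Require Import Defs.
From HB Require Import structures.
From mathcomp Require Import all_boot all_order all_algebra.
From mathcomp Require Import all_classical all_reals all_analysis.
From mathcomp Require Import ring lra measurable_realfun.
Import Order.TTheory GRing.Theory Num.Theory.
Local Open Scope ring_scope.
Local Open Scope classical_set_scope.

Section K.
Variable R : realType.

Definition seqd (e : R) (n : nat) : R :=
  if n is 0 then e / 3 else 2 * e / (3 * (n%:R * (n%:R + 1))).

Lemma ln_le (a b : R) : 0 < a -> a <= b -> ln a <= ln b.
Proof.
move=> ha hab; rewrite ler_ln ?posrE //; exact: lt_le_trans hab.
Qed.

Lemma logp_ge1 (x : R) : 1 <= logp x.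
Proof. by rewrite /logp le_max lexx. Qed.

Lemma logp_ge_ln (x : R) : ln x <= logp x.
Proof. by rewrite /logp le_max lexx orbT. Qed.

Lemma lil_ge1 (x : R) : 1 <= lil x.
Proof. exact: logp_ge1. Qed.

Lemma lil_ge_ln (x : R) (n : nat) : (0 < n)%N -> n%:R <= ln x -> ln n%:R <= lil x.
Proof.
move=> hn hx; apply: le_trans (logp_ge_ln _).
apply: ln_le; first by rewrite ltr0n.
exact: le_trans hx (logp_ge_ln _).
Qed.

Lemma expR2_ge : 9/2 <= expR 2 :> R.
Proof.
have h : 3/2 <= expR (1/2) :> R.
  by apply: le_trans (expR_ge1Dx _); lra.
have -> : 2 = 4%:R * (1/2) :> R by lra.
rewrite expRM_natl.
have h0 : 0 <= expR (1/2) :> R by apply: ltW; exact: expR_gt0.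
set a := expR (1/2) in h h0 *.
have -> : a ^+ 4 = (a * a) * (a * a) by rewrite !exprS expr0 mulr1 !mulrA.
have h2 : 9/4 <= a * a by nra.
nra.
Qed.

Lemma ln_92 : ln (9/2) <= 2 :> R.
Proof.
rewrite -[X in _ <= X](expRK (2:R)).
apply: ln_le; [lra | exact: expR2_ge].
Qed.

Lemma ln_seqd (d L : R) (n : nat) : 0 < d -> 1 <= L ->
  ((0 < n)%N -> ln n%:R <= L) ->
  ln ((seqd d n)^-1) <= ln (2 / d) + 2 * L.
Proof.
move=> hd hL hn; case: n hn => [|n] hn /=.
  have -> : (d / 3)^-1 = (2 / d) * (3/2).
    by field; rewrite gt_eqF.
  rewrite lnM ?posrE ?divr_gt0 //.
  rewrite lerD2l; have h := @ln_sublinear R (3/2) ltac:(lra); lra.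
have hn1 : 1 <= n.+1%:R :> R by rewrite ler1n.
set N := n.+1%:R in hn1 hn *.
have -> : (2 * d / (3 * (N * (N + 1))))^-1 = (2 / d) * (3 * N * (N + 1) / 4).
  by field; apply/and3P; split; rewrite gt_eqF //; lra.
rewrite lnM ?posrE ?divr_gt0 //; last by nra.
rewrite lerD2l.
have hlnN := hn isT.
case: (leP 3 N) => h3.
  apply: (@le_trans _ _ (ln (N ^+ 2))).
    by apply: ln_le; [nra | rewrite expr2; nra].
  by rewrite lnXn; [rewrite mulr2n; lra | lra].
apply: (@le_trans _ _ (ln (9/2))); last by have := ln_92; lra.
have h2 : N <= 2.
  by move: h3; rewrite /N ltr_nat => h3; rewrite (ler_nat R n.+1 2).
by apply: ln_le; nra.
Qed.

Lemma key_assemble (C D b k d m E : R) (n : nat) :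
  0 <= C -> 0 < b -> 0 < k -> 0 < d -> 0 <= m -> 0 < E ->
  k * E + m <= (1 + b) * m + k ->
  m / (k * E) <= expR 1 / b ->
  ((0 < n)%N -> ln n%:R <= lil (b * m / k)) ->
  C * (k * E + m) * Num.sqrt (ln ((seqd d n)^-1) + D + ln (1 + m / (k * E)))
   <= C * ((1 + b) * m + k) * Num.sqrt (ln (2 / d) + 2 * lil (b * m / k) + D + ln (1 + expR 1 / b)).
Proof.
move=> hC hb hk hd hm hE h1 h2 h3.
apply: ler_pM.
- apply: mulr_ge0 => //; apply: addr_ge0 => //; apply: ltW; exact: mulr_gt0.
- exact: sqrtr_ge0.
- apply: ler_wpM2l => //.
apply: ler_wsqrtr.
have h4 := @ln_seqd d _ n hd (lil_ge1 (b * m / k)) h3.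
have h5 : ln (1 + m / (k * E)) <= ln (1 + expR 1 / b).
  apply: ln_le; last by rewrite lerD2l.
  by rewrite ltr_pwDl // divr_ge0 // ltW // mulr_gt0.
lra.
Qed.

Lemma key (C D b k d m : R) : 0 <= C -> 0 < b -> 0 < k -> 0 < d -> 0 <= m ->
  exists n : nat,
  C * (k * expR n%:R + m) * Num.sqrt (ln ((seqd d n)^-1) + D + ln (1 + m / (k * expR n%:R)))
   <= C * ((1 + b) * m + k) * Num.sqrt (ln (2 / d) + 2 * lil (b * m / k) + D + ln (1 + expR 1 / b)).
Proof.
move=> hC hb hk hd hm.
have hx0 : 0 <= b * m / k by apply: divr_ge0; [apply: mulr_ge0; lra | lra].
have hkx : k * (b * m / k) = b * m by field; rewrite gt_eqF.
case: (ltP (b * m / k) (expR 1)) => hx.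
  exists 0%N; apply: key_assemble => //.
  - rewrite expR0 mulr1; nra.
  - rewrite expR0 mulr1.
    have -> : m / k = (b * m / k) / b by field; apply/andP; split; rewrite gt_eqF.
    by rewrite ler_wpM2r // ?invr_ge0 ?ltW.
set x := b * m / k in hx0 hkx hx *.
have hx1 : 0 < x by apply: lt_le_trans hx; exact: expR_gt0.
have hlx : 1 <= ln x.
  by rewrite -[X in X <= _](expRK (1:R)); apply: ln_le => //; exact: expR_gt0.
have hlx0 : 0 <= ln x by lra.
have := truncn_itv hlx0; set n := Num.truncn (ln x) => /andP [hn1 hn2].
have hn0 : (0 < n)%N by rewrite /n truncn_gt0.
exists n; apply: key_assemble => //.
- have hE : expR n%:R <= x by rewrite -[X in _ <= X](lnK (x:=x)) ?posrE // ler_expR.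
  have : k * expR n%:R <= k * x by rewrite ler_wpM2l // ltW.
  nra.
- have hE : x <= expR 1 * expR n%:R.
    rewrite -expRD -[X in X <= _](lnK (x:=x)) ?posrE // ler_expR.
    by move: hn2; rewrite -natr1; lra.
  have hE0 := expR_gt0 (n%:R : R).
  rewrite ler_pdivrMr ?mulr_gt0 //.
  have -> : expR 1 / b * (k * expR n%:R) = (expR 1 * expR n%:R) * k / b.
    by field; rewrite gt_eqF.
  rewrite ler_pdivlMr // -/x.
  have -> : m * b = x * k by rewrite /x; field; rewrite gt_eqF.
  by rewrite ler_wpM2r // ltW.
- move=> _; exact: lil_ge_ln.
Qed.
Lemma seqd_gt0 e n : 0 < e -> 0 < seqd e n.
Proof.
move=> he; case: n => [|n] /=; first by apply: divr_gt0 => //.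
apply: divr_gt0; first by rewrite mulr_gt0.
by rewrite !mulr_gt0 // ?ltr0Sn // addr_gt0.
Qed.

Lemma seqd_le e n : 0 < e -> seqd e n <= e.
Proof.
move=> he; case: n => [|n] /=; first by lra.
rewrite ler_pdivrMr; last by rewrite !mulr_gt0 // ?ltr0Sn // addr_gt0.
have h1 : 1 <= n.+1%:R :> R by rewrite ler1n.
have : 2 <= n.+1%:R * (n.+1%:R + 1) :> R by nra.
nra.
Qed.

Lemma seqd_partial e N : 0 < e ->
  \sum_(0 <= n < N.+1) seqd e n = e - 2 * e / (3 * N.+1%:R).
Proof.
move=> he; elim: N => [|N IH].
  by rewrite big_nat1 /=; field.
rewrite big_nat_recr //= IH.
have h : 0 < N.+1%:R :> R by rewrite ltr0Sn.
rewrite -[N.+2%:R]natr1; field.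
by apply/andP; split; rewrite gt_eqF // ?addr_gt0 //.
Qed.

Lemma seqd_series e : 0 < e ->
  (\sum_(0 <= n <oo) (seqd e n)%:E <= e%:E)%E.
Proof.
move=> he; apply: lime_le.
  by apply: is_cvg_nneseries => n _ _; rewrite lee_fin ltW // seqd_gt0.
apply: nearW => N; case: N => [|N]; first by rewrite big_geq // lee_fin ltW.
rewrite sumEFin ?seqd_partial // lee_fin.
rewrite lerBlDr lerDl; apply: divr_ge0; first by lra.
by rewrite mulr_ge0.
Qed.
End K.

Lemma ev_meas (R : realType) (d : measure_display) (T : measurableType d) (P : probability T R)
  (Z M : {RV P >-> R}) (h : R -> R) : measurable_fun setT h ->
  measurable (ge_event Z (fun w => h (M w))).
Proof.
move=> mh.
have := @measurable_fun_le _ _ _ setT (fun w => h (M w)) Z measurableT.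
rewrite setTI; apply.
  exact: measurableT_comp.
exact: measurable_funPT.
Qed.

Lemma meas_sqrt (R : realType) : measurable_fun setT (@Num.sqrt R).
Proof. apply: continuous_measurable_fun; exact: sqrt_continuous. Qed.

Lemma meas_logp (R : realType) : measurable_fun setT (@logp R).
Proof.
rewrite /logp.
exact: (@measurable_maxr _ _ R setT (fun _ => 1) (@ln R) (measurable_cst _) (@measurable_ln R)).
Qed.

Lemma meas_lil (R : realType) : measurable_fun setT (@lil R).
Proof. rewrite /lil. exact: (measurableT_comp (@meas_logp R) (@meas_logp R)). Qed.


Arguments seqd {R}.
Arguments key {R}.
Arguments seqd_series {R}.
Arguments seqd_gt0 {R}.
Arguments seqd_le {R}.
Arguments lil_ge1 {R}.

Lemma neg_pt (R : realType) (C D e m z : R) : C < 0 -> 0 < e -> e <= expR (D - 1) -> 0 <= m ->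
  exists n : nat, C * (n.+1%:R + m) *
    Num.sqrt (ln ((seqd e n)^-1) + D + ln (1 + m / n.+1%:R)) <= z.
Proof.
move=> hC he heD hm.
set y := `|z / C|.
have hy0 : 0 <= y by exact: normr_ge0.
have := truncn_itv hy0; set n := Num.truncn y => /andP [_ hn2].
exists n.
have hn0 : 0 < n.+1%:R :> R by rewrite ltr0Sn.
have hzC : z / C <= n.+1%:R by apply: le_trans (ltW hn2); exact: ler_norm.
have hCn : C * n.+1%:R <= z.
  have : C * n.+1%:R <= C * (z / C) by rewrite ler_wnM2l // ltW.
  by rewrite [C * (z / C)]mulrC divfK // lt_eqF.
set L := ln _ + D + _.
have hL : 1 <= L.
  have hs := seqd_gt0 e n he.
  have hs1 : seqd e n <= expR (D - 1) by apply: le_trans heD; exact: seqd_le.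
  have h1 : 1 - D <= ln ((seqd e n)^-1).
    rewrite -[X in X <= _](expRK (1 - D)); apply: ln_le; first exact: expR_gt0.
    have -> : 1 - D = - (D - 1) by ring.
    rewrite expRN lef_pV2 ?posrE //; exact: expR_gt0.
  have h2 : 0 <= ln (1 + m / n.+1%:R).
    by apply: ln_ge0; rewrite lerDl divr_ge0 // ltW.
  rewrite /L; lra.
have hs : 1 <= Num.sqrt L by rewrite -(sqrtr1 R) ler_wsqrtr.
have ha : C * (n.+1%:R + m) <= 0 by apply: mulr_le0_ge0; [exact: ltW | lra].
have : C * (n.+1%:R + m) * Num.sqrt L <= C * (n.+1%:R + m).
  by rewrite -[leRHS]mulr1 ler_wnM2l.
have : C * m <= 0 by apply: mulr_le0_ge0 => //; exact: ltW.
nra.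
Qed.

Lemma neg_false (R : realType) (d : measure_display) (T : measurableType d) (P : probability T R)
  (Z M : {RV P >-> R}) (C D : R) :
  C < 0 -> (forall w, 0 <= M w) -> tail_hyp P Z M C D -> False.
Proof.
move=> hC hM hyp.
set e := Num.min (1/2) (expR (D - 1)).
have he0 : 0 < e by rewrite lt_min expR_gt0 andbT; lra.
have he2 : e <= 1/2 by rewrite ge_min lexx.
have heD : e <= expR (D - 1) by rewrite ge_min lexx orbT.
set F := fun n : nat => ge_event Z (fun w => C * (n.+1%:R + M w) *
    Num.sqrt (ln ((seqd e n)^-1) + D + ln (1 + M w / n.+1%:R))).
have mF : forall n, measurable (F n).
  move=> n; apply: (@ev_meas R d T P Z M (fun m => C * (n.+1%:R + m) *
    Num.sqrt (ln ((seqd e n)^-1) + D + ln (1 + m / n.+1%:R)))).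
  apply: measurable_funM; first apply: measurable_funM.
  - exact: measurable_cst.
  - apply: measurable_funD; [exact: measurable_cst | exact: measurable_id].
  apply: (measurableT_comp (meas_sqrt R)).
  apply: measurable_funD; first exact: measurable_cst.
  apply: (measurableT_comp (@measurable_ln R)).
  apply: measurable_funD; first exact: measurable_cst.
  apply: measurable_funM; [exact: measurable_id | exact: measurable_cst].
have sub : [set: T] `<=` \bigcup_n F n.
  move=> w _; have [n hn] := @neg_pt R C D e (M w) (Z w) hC he0 heD (hM w).
  by exists n.
have := measure_sigma_subadditive P mF measurableT sub.
move=> h1.
have h0 : (1 <= P setT)%E by rewrite (probability_setT P).
have h2 : (\sum_(0 <= n <oo) P (F n) <= \sum_(0 <= n <oo) (seqd e n)%:E)%E.
  apply: lee_nneseries => n _ //.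
  apply: hyp; first by rewrite ltr0Sn.
  apply/andP; split; first exact: seqd_gt0.
  apply: le_lt_trans (seqd_le e n he0) _; lra.
have h3 := seqd_series e he0.
have : (1 <= e%:E)%E by apply: le_trans h3; apply: le_trans h2; exact: le_trans h0 h1.
rewrite lee_fin; lra.
Qed.

Lemma part1 (R : realType) (d : measure_display) (T : measurableType d) (P : probability T R)
          (Z M : {RV P >-> R}) (C D : R) :
     (forall w, 0 <= M w) ->
     tail_hyp P Z M C D ->
     forall beta kappa delta : R, 0 < beta -> 0 < kappa -> 0 < delta < 1 ->
       (P (ge_event Z (fun w => (C * ((1 + beta) * M w + kappa) *
                    Num.sqrt (ln (2 / delta) + 2 * lil (beta * M w / kappa) + D
                              + ln (1 + expR 1 / beta)))%R))
          <= delta%:E)%E.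
Proof.
move=> hM hyp b k dl hb hk /andP [hd0 hd1].
case: (ltP C 0) => hC; first by case: (@neg_false R d T P Z M C D hC hM hyp).
set F := fun n : nat => ge_event Z (fun w => C * (k * expR n%:R + M w) *
    Num.sqrt (ln ((seqd dl n)^-1) + D + ln (1 + M w / (k * expR n%:R)))).
have mF : forall n, measurable (F n).
  move=> n; apply: (@ev_meas R d T P Z M (fun m => C * (k * expR n%:R + m) *
    Num.sqrt (ln ((seqd dl n)^-1) + D + ln (1 + m / (k * expR n%:R))))).
  apply: measurable_funM; first apply: measurable_funM.
  - exact: measurable_cst.
  - apply: measurable_funD; [exact: measurable_cst | exact: measurable_id].
  apply: (measurableT_comp (meas_sqrt R)).
  apply: measurable_funD; first exact: measurable_cst.
  apply: (measurableT_comp (@measurable_ln R)).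
  apply: measurable_funD; first exact: measurable_cst.
  apply: measurable_funM; [exact: measurable_id | exact: measurable_cst].
have mE : measurable (ge_event Z (fun w => (C * ((1 + b) * M w + k) *
                    Num.sqrt (ln (2 / dl) + 2 * lil (b * M w / k) + D
                              + ln (1 + expR 1 / b)))%R)).
  apply: (@ev_meas R d T P Z M (fun m => C * ((1 + b) * m + k) *
                    Num.sqrt (ln (2 / dl) + 2 * lil (b * m / k) + D
                              + ln (1 + expR 1 / b)))).
  apply: measurable_funM; first apply: measurable_funM.
  - exact: measurable_cst.
  - apply: measurable_funD; last exact: measurable_cst.
    apply: measurable_funM; [exact: measurable_cst | exact: measurable_id].
  apply: (measurableT_comp (meas_sqrt R)).
  apply: measurable_funD; last exact: measurable_cst.
  apply: measurable_funD; last exact: measurable_cst.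
  apply: measurable_funD; first exact: measurable_cst.
  apply: measurable_funM; first exact: measurable_cst.
  apply: (measurableT_comp (meas_lil R)).
  apply: measurable_funM; last exact: measurable_cst.
  apply: measurable_funM; [exact: measurable_cst | exact: measurable_id].
have sub : ge_event Z (fun w => (C * ((1 + b) * M w + k) *
                    Num.sqrt (ln (2 / dl) + 2 * lil (b * M w / k) + D
                              + ln (1 + expR 1 / b)))%R) `<=` \bigcup_n F n.
  move=> w hw; have [n hn] := key C D b k dl (M w) hC hb hk hd0 (hM w).
  exists n => //; rewrite /F /ge_event /=; exact: le_trans hn hw.
apply: le_trans (measure_sigma_subadditive P mF mE sub) _.
apply: le_trans (seqd_series dl hd0).
apply: lee_nneseries => n _ //.
apply: hyp; first by rewrite mulr_gt0 // expR_gt0.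
apply/andP; split; first exact: seqd_gt0.
apply: le_lt_trans (seqd_le dl n hd0) _; lra.
Qed.

Lemma p2_pt (R : realType) (C D k d m : R) : 0 <= C -> 1 <= D -> 0 < k -> 0 < d < 1 -> 0 <= m ->
  C * ((1 + 1) * m + k) * Num.sqrt (ln (2 / d) + 2 * lil (1 * m / k) + D + ln (1 + expR 1 / 1))
  <= 4 * C * (m + k) * Num.sqrt (ln (d^-1) + lil (m / k) + D).
Proof.
move=> hC hD hk /andP [hd0 hd1] hm.
rewrite mul1r divr1.
have he2 : 2 <= expR 1 :> R by apply: le_trans (expR_ge1Dx _); lra.
have hln2 : ln 2 <= 1 :> R.
  by rewrite -[X in _ <= X](expRK (1:R)); apply: ln_le.
have hlne : ln (1 + expR 1) <= 2 :> R.
  rewrite -[X in _ <= X](expRK (2:R)); apply: ln_le; first lra.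
  have -> : 2 = 1 + 1 :> R by lra.
  rewrite expRD; nra.
have h2d : ln (2 / d) = ln 2 + ln (d^-1).
  by rewrite lnM ?posrE ?invr_gt0.
have hld : 0 <= ln (d^-1).
  by apply: ln_ge0; rewrite invf_ge1 // ltW.
have hl := lil_ge1 (m / k).
set S2 := ln (d^-1) + lil (m / k) + D.
have hS : ln (2 / d) + 2 * lil (m / k) + D + ln (1 + expR 1) <= 4 * S2.
  rewrite h2d /S2; lra.
have hS2 : 0 <= S2 by rewrite /S2; lra.
have hsq : Num.sqrt (4 * S2) = 2 * Num.sqrt S2.
  have h4 : (4:R) = 2 ^+ 2 by rewrite expr2; lra.
  rewrite sqrtrM; last lra.
  by rewrite h4 sqrtr_sqr ger0_norm.
have hsq2 : Num.sqrt (ln (2 / d) + 2 * lil (m / k) + D + ln (1 + expR 1)) <= 2 * Num.sqrt S2.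
  by rewrite -hsq ler_wsqrtr.
have hs0 : 0 <= Num.sqrt (ln (2 / d) + 2 * lil (m / k) + D + ln (1 + expR 1)) by exact: sqrtr_ge0.
have hs1 : 0 <= Num.sqrt S2 by exact: sqrtr_ge0.
have ha : 0 <= C * ((1 + 1) * m + k) by apply: mulr_ge0 => //; nra.
have hb : C * ((1 + 1) * m + k) <= 2 * C * (m + k) by nra.
have := ler_pM ha hs0 hb hsq2.
have -> : 2 * C * (m + k) * (2 * Num.sqrt S2) = 4 * C * (m + k) * Num.sqrt S2 by ring.
done.
Qed.

Theorem lemma9 (R : realType) :
  (forall (d : measure_display) (T : measurableType d) (P : probability T R)
          (Z M : {RV P >-> R}) (C D : R),
     (forall w, 0 <= M w) ->
     tail_hyp P Z M C D ->
     forall beta kappa delta : R, 0 < beta -> 0 < kappa -> 0 < delta < 1 ->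
       (P (ge_event Z (fun w => (C * ((1 + beta) * M w + kappa) *
                    Num.sqrt (ln (2 / delta) + 2 * lil (beta * M w / kappa) + D
                              + ln (1 + expR 1 / beta)))%R))
          <= delta%:E)%E)
  /\
  (exists c0 c1 : R, 0 < c0 /\ 0 < c1 /\
     forall (d : measure_display) (T : measurableType d) (P : probability T R)
            (Z M : {RV P >-> R}) (C D : R),
       c0 <= D ->
       (forall w, 0 <= M w) ->
       tail_hyp P Z M C D ->
       forall kappa delta : R, 0 < kappa -> 0 < delta < 1 ->
         (P (ge_event Z (fun w => (c1 * C * (M w + kappa) *
                      Num.sqrt (ln (delta^-1) + lil (M w / kappa) + D))%R))
            <= delta%:E)%E).
Proof.
split; first exact: part1.
exists 1, 4; split; first lra; split; first lra.
move=> d T P Z M C D hD hM hyp k dl hk hdl.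
case: (ltP C 0) => hC; first by case: (@neg_false R d T P Z M C D hC hM hyp).
have h1 := @part1 R d T P Z M C D hM hyp 1 k dl ltr01 hk hdl.
apply: le_trans h1.
apply: le_measure; rewrite ?inE.
- apply: (@ev_meas R d T P Z M (fun m => 4 * C * (m + k) *
                      Num.sqrt (ln (dl^-1) + lil (m / k) + D))).
  apply: measurable_funM; first apply: measurable_funM.
  - exact: measurable_cst.
  - apply: measurable_funD; [exact: measurable_id | exact: measurable_cst].
  apply: (measurableT_comp (meas_sqrt R)).
  apply: measurable_funD; last exact: measurable_cst.
  apply: measurable_funD; first exact: measurable_cst.
  apply: (measurableT_comp (meas_lil R)).
  apply: measurable_funM; [exact: measurable_id | exact: measurable_cst].
- apply: (@ev_meas R d T P Z M (fun m => C * ((1 + 1) * m + k) *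
                    Num.sqrt (ln (2 / dl) + 2 * lil (1 * m / k) + D
                              + ln (1 + expR 1 / 1)))).
  apply: measurable_funM; first apply: measurable_funM.
  - exact: measurable_cst.
  - apply: measurable_funD; last exact: measurable_cst.
    apply: measurable_funM; [exact: measurable_cst | exact: measurable_id].
  apply: (measurableT_comp (meas_sqrt R)).
  apply: measurable_funD; last exact: measurable_cst.
  apply: measurable_funD; last exact: measurable_cst.
  apply: measurable_funD; first exact: measurable_cst.
  apply: measurable_funM; first exact: measurable_cst.
  apply: (measurableT_comp (meas_lil R)).
  apply: measurable_funM; last exact: measurable_cst.
  apply: measurable_funM; [exact: measurable_cst | exact: measurable_id].
move=> w; rewrite /ge_event /= => hw.
apply: le_trans hw.
apply: p2_pt => //; lra.
Qed.
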